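(* Consider the nonlinear program described in the context and the control-affine system $\dot x=-\nabla f(x)-\frac{\partial g}{\partial x}(x)^\top u-\frac{\partial h}{\partial x}(x)^\top v$ with inputs $(u,v)\in\mathcal{U}=\mathbb{R}^m_{\ge0}\times\mathbb{R}^k$. If MFCQ holds at every $x\in\mathcal{C}$, then there exists an open set $X$ containing $\mathcal{C}$ such that $\phi=(g,h):\mathbb{R}^n\to\mathbb{R}^{m+k}$ is an $(m,k)$-vector control barrier function of $\mathcal{C}$ on $X$ relative to $\mathcal{U}$ for this system.
   Context: Let $f:\mathbb{R}^n\to\mathbb{R}$, $g:\mathbb{R}^n\to\mathbb{R}^m$, $h:\mathbb{R}^n\to\mathbb{R}^k$ be continuously differentiable; program: minimize $f(x)$ subject to $g(x)\le0$, $h(x)=0$; feasible set $\mathcal{C}=\{x:g(x)\le0,h(x)=0\}$; $I_0(x)=\{i:g_i(x)=0\}$. MFCQ at $x$: $\{\nabla h_j(x)\}_{j=1}^k$ linearly independent and some $\xi$ has $\nabla h_j(x)^\top\xi=0$ for all $j$ and $\nabla g_i(x)^\top\xi<0$ for $i\in I_0(x)$. For a set $\mathcal{C}\subset X\subset\mathbb{R}^n$, a continuously differentiable $\phi:\mathbb{R}^n\to\mathbb{R}^{m+k}$ is an $(m,k)$-vector control barrier function of $\mathcal{C}$ on $X$ relative to $\mathcal{U}$ (for a control-affine system $\dot x=F_0(x)+\sum_\ell w_\ell F_\ell(x)$) if $\mathcal{C}=\{x:\phi_i(x)\le0,\ 1\le i\le m;\ \phi_j(x)=0,\ m<j\le m+k\}$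 and there exists $\alpha>0$ such that, for all $x\in X$, the set of $w\in\mathcal{U}$ with $\nabla\phi_i(x)^\top(F_0(x)+\sum_\ell w_\ell F_\ell(x))+\alpha\phi_i(x)\le0$ for $1\le i\le m$ and $\nabla\phi_j(x)^\top(F_0(x)+\sum_\ell w_\ell F_\ell(x))+\alpha\phi_j(x)=0$ for $m<j\le m+k$ is nonempty. For the system above, with $G=\frac{\partial g}{\partial x}(x)$, $H=\frac{\partial h}{\partial x}(x)$, this set is $K_\alpha(x)=\{(u,v)\in\mathbb{R}^m_{\ge0}\times\mathbb{R}^k: -GG^\top u-GH^\top v\le G\nabla f(x)-\alpha g(x),\ -HG^\top u-HH^\top v=H\nabla f(x)-\alpha h(x)\}$. *)

(* Defs.v *)
From HB Require Import structures.
From mathcomp Require Import all_boot all_order all_algebra.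
From mathcomp Require Import all_classical all_reals all_analysis.
Set Implicit Arguments. Unset Strict Implicit. Unset Printing Implicit Defensive.
Import Order.TTheory GRing.Theory Num.Theory.
Import numFieldNormedType.Exports.
Local Open Scope classical_set_scope.
Local Open Scope ring_scope.

Section Defs.
Variable R : realType.

Definition C1_scalar n (f : 'rV[R]_n -> R) (gradf : 'rV[R]_n -> 'rV[R]_n) :=
  (forall x, differentiable f x /\ forall v, 'd f x v = (v *m (gradf x)^T) 0 0)
  /\ continuous gradf.

(* g : R^n -> R^p is continuously differentiable; J x : 'M_(n,p) is the
   TRANSPOSED Jacobian, i.e. dg(x)v = v *m J x (so (dg/dx)(x) = (J x)^T,
   and column j of J x is the gradient of g_j at x); J is continuous. *)
Definition C1_vec n p (g : 'rV[R]_n -> 'rV[R]_p) (J : 'rV[R]_n -> 'M[R]_(n, p)) :=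
  (forall x, differentiable g x /\ forall v, 'd g x v = v *m J x)
  /\ continuous J.

Definition C1 n p (g : 'rV[R]_n -> 'rV[R]_p) := exists J, C1_vec g J.

Definition MFCQ n m k (g : 'rV[R]_n -> 'rV[R]_m) (h : 'rV[R]_n -> 'rV[R]_k)
    (Jg : 'rV[R]_n -> 'M[R]_(n, m)) (Jh : 'rV[R]_n -> 'M[R]_(n, k)) (x : 'rV[R]_n) :=
  (* the gradients of h_1..h_k (the rows of (dh/dx)(x)) are linearly independent *)
  row_free (Jh x)^T /\
  exists xi : 'rV[R]_n,
    (forall j : 'I_k, (xi *m Jh x) 0 j = 0) /\
    (forall i : 'I_m, g x 0 i = 0 -> (xi *m Jg x) 0 i < 0).

(* (m,k)-vector control barrier function of C on X relative to U for the
   control-affine system  xdot = F0 x + sum_l w_l F_l(x) = F0 x + w *m B x,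
   where F_l(x) is row l of B x. Components 1..m of phi are the indices
   lshift k i, components m+1..m+k are rshift m j. *)
Definition vector_cbf n m k q (phi : 'rV[R]_n -> 'rV[R]_(m + k))
    (C X : set 'rV[R]_n) (F0 : 'rV[R]_n -> 'rV[R]_n) (B : 'rV[R]_n -> 'M[R]_(q, n))
    (U : set 'rV[R]_q) :=
  C `<=` X /\
  C1 phi /\
  C = [set x | (forall i : 'I_m, phi x 0 (lshift k i) <= 0) /\
               (forall j : 'I_k, phi x 0 (rshift m j) = 0)] /\
  exists alpha : R, 0 < alpha /\
    forall x, X x -> exists w : 'rV[R]_q, U w /\
      (forall i : 'I_m,
         ('d phi x (F0 x + w *m B x)) 0 (lshift k i) + alpha * phi x 0 (lshift k i) <= 0) /\
      (forall j : 'I_k,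
         ('d phi x (F0 x + w *m B x)) 0 (rshift m j) + alpha * phi x 0 (rshift m j) = 0).

Definition input_set m k : set 'rV[R]_(m + k) :=
  [set w | forall i : 'I_m, 0 <= w 0 (lshift k i)].

End Defs.

(* Main.v *)
Require Import Defs.
From HB Require Import structures.
From mathcomp Require Import all_boot all_order all_algebra.
From mathcomp Require Import all_classical all_reals all_analysis.
From mathcomp Require Import ring lra.
Import Order.TTheory GRing.Theory Num.Theory.
Import numFieldNormedType.Exports.
Local Open Scope classical_set_scope.
Local Open Scope ring_scope.
Section Farkas.
Variable R : realFieldType.
Variable n : nat.
Implicit Types (u v z a b : 'rV[R]_n).

Definition dotv u v : R := (u *m v^T) 0 0.

Lemma dotvE u v : dotv u v = \sum_i u 0 i * v 0 i.
Proof. by rewrite /dotv mxE; apply: eq_bigr => i _; rewrite mxE. Qed.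

Lemma dotvC u v : dotv u v = dotv v u.
Proof. by rewrite !dotvE; apply: eq_bigr => i _; rewrite mulrC. Qed.

Lemma dotvDl u v z : dotv (u + v) z = dotv u z + dotv v z.
Proof. by rewrite /dotv mulmxDl mxE. Qed.

Lemma dotvZl t u z : dotv (t *: u) z = t * dotv u z.
Proof. by rewrite /dotv -scalemxAl mxE. Qed.

Lemma dotvNl u z : dotv (- u) z = - dotv u z.
Proof. by rewrite /dotv mulNmx mxE. Qed.

Lemma dotvBl u v z : dotv (u - v) z = dotv u z - dotv v z.
Proof. by rewrite dotvDl dotvNl. Qed.

Lemma dotv0l z : dotv 0 z = 0.
Proof. by rewrite /dotv mul0mx mxE. Qed.

Lemma dotvDr u v z : dotv z (u + v) = dotv z u + dotv z v.
Proof. by rewrite dotvC dotvDl !(dotvC z). Qed.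
Lemma dotvZr t u z : dotv z (t *: u) = t * dotv z u.
Proof. by rewrite dotvC dotvZl !(dotvC z). Qed.
Lemma dotvBr u v z : dotv z (u - v) = dotv z u - dotv z v.
Proof. by rewrite dotvC dotvBl !(dotvC z). Qed.

Lemma dotv_self_gt0 b : b != 0 -> 0 < dotv b b.
Proof.
move=> b0; rewrite dotvE lt_def; apply/andP; split; last first.
  by apply: sumr_ge0 => i _; rewrite -expr2; exact: sqr_ge0.
apply: contra b0 => /eqP/psumr_eq0P H; apply/eqP/rowP => i.
have := H (fun j _ => ltac:(rewrite -expr2; exact: sqr_ge0)) i isT.
by move/eqP; rewrite -expr2 sqrf_eq0 mxE => /eqP.
Qed.

Fixpoint incone (s : seq 'rV[R]_n) b : Prop :=
  match s with
  | [::] => b = 0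
  | a :: s' => exists2 t, 0 <= t & incone s' (b - t *: a)
  end.

Lemma incone_dot s b z : incone s b -> (forall a, a \in s -> 0 <= dotv a z) ->
  0 <= dotv b z.
Proof.
elim: s b => [|a s IH] b /=; first by move=> -> _; rewrite dotv0l.
move=> [t t0 Hs] Ha.
have := IH _ Hs (fun a' ha' => Ha a' (ltac:(by rewrite inE ha' orbT))).
rewrite dotvBl dotvZl subr_ge0; apply: le_trans.
by apply: mulr_ge0 => //; apply: Ha; rewrite mem_head.
Qed.

Lemma incone_map (L : 'rV[R]_n -> 'rV[R]_n) s b :
  L 0 = 0 -> (forall u v, L (u + v) = L u + L v) ->
  (forall t u, L (t *: u) = t *: L u) ->
  incone (map L s) b -> exists2 v, incone s v & b = L v.
Proof.
move=> L0 LD LZ; elim: s b => [|a s IH] b /=; first by move=> ->; exists 0.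
move=> [t t0 /IH [v Hv Hb]]; exists (v + t *: a).
  by exists t => //; rewrite addrK.
by rewrite LD LZ -Hb subrK.
Qed.

Lemma farkas_aux N : forall s b, size s = N -> ~ incone s b ->
  exists z, (forall a, a \in s -> 0 <= dotv a z) /\ dotv b z < 0.
Proof.
elim: N => [|N IH] [|a s] b //= Hs Hnot.
- exists (- b); split; first by move=> a; rewrite in_nil.
  rewrite (dotvC b) dotvNl oppr_lt0; apply: dotv_self_gt0.
  by apply/eqP => b0; apply: Hnot.
- case: Hs => Hs.
  have Hnot' : ~ incone s b by move=> H; apply: Hnot; exists 0 => //; rewrite scale0r subr0.
  have [z' [Hz'1 Hz'2]] := IH s b Hs Hnot'.
  case: (lerP 0 (dotv a z')) => Haz.
    exists z'; split => // a'; rewrite inE => /orP [/eqP -> //|]; exact: Hz'1.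
  pose L v := dotv v z' *: a - dotv a z' *: v.
  have L0 : L 0 = 0 by rewrite /L dotv0l scale0r scaler0 subr0.
  have LD : forall u v, L (u + v) = L u + L v.
    by move=> u v; rewrite /L dotvDl scalerDl scalerDr opprD addrACA.
  have LZ : forall t u, L (t *: u) = t *: L u.
    by move=> t u; rewrite /L dotvZl scalerBr !scalerA (mulrC (dotv a z')).
  have Hnot'' : ~ incone (map L s) (L b).
    move=> /(@incone_map L s (L b) L0 LD LZ) [v Hv Hb]; apply: Hnot.
    have vz : 0 <= dotv v z' by apply: incone_dot Hv Hz'1.
    have d0 : dotv a z' != 0 by rewrite lt_eqF.
    exists ((dotv b z' - dotv v z') / dotv a z').
      by rewrite ler_ndivlMr // mul0r subr_le0 (le_trans (ltW Hz'2)).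
    suff -> : b - (dotv b z' - dotv v z') / dotv a z' *: a = v by [].
    apply/rowP => j; have := congr1 (fun M : 'rV[R]_n => M 0 j) Hb.
    rewrite /L !mxE => Hj.
    apply/eqP; rewrite -subr_eq0; apply/eqP.
    apply: (mulfI d0); rewrite mulr0.
    transitivity (- ((dotv b z' * a 0 j - dotv a z' * b 0 j) -
                     (dotv v z' * a 0 j - dotv a z' * v 0 j))).
      by field.
    by rewrite Hj subrr oppr0.
  have [z'' [Hz''1 Hz''2]] := IH (map L s) (L b) (ltac:(by rewrite size_map)) Hnot''.
  exists (dotv a z'' *: z' - dotv a z' *: z'').
  have key : forall u, dotv u (dotv a z'' *: z' - dotv a z' *: z'') = dotv (L u) z''.
    move=> u; rewrite dotvBr !dotvZr /L dotvBl !dotvZl.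
    by rewrite mulrC.
  split; last by rewrite key.
  move=> a'; rewrite inE => /orP [/eqP ->|Ha'].
    by rewrite dotvBr !dotvZr mulrC subrr.
  by rewrite key; apply: Hz''1; apply: map_f.
Qed.

Lemma farkas s b : (forall z, (forall a, a \in s -> 0 <= dotv a z) -> 0 <= dotv b z) ->
  incone s b.
Proof.
move=> H; apply: contrapT => Hn.
have [z [Hz1 Hz2]] := @farkas_aux (size s) s b (erefl _) Hn.
by have := H z Hz1; rewrite leNgt Hz2.
Qed.

Lemma incone_seq (I : eqType) (F : I -> 'rV[R]_n) r b : uniq r -> incone (map F r) b ->
  exists c : I -> R, (forall i, 0 <= c i) /\ b = \sum_(i <- r) c i *: F i.
Proof.
elim: r b => [|x r IH] b /=.
  by move=> _ ->; exists (fun _ => 0); split => //; rewrite big_nil.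
move=> /andP [xr ur] [t t0 /(IH _ ur) [c [c0 Hc]]].
exists (fun i => if i == x then t else c i); split.
  by move=> i; case: ifP.
rewrite big_cons eqxx; rewrite big_seq_cond (eq_bigr (fun i => c i *: F i)).
  by rewrite -big_seq_cond -Hc addrC subrK.
by move=> i /andP [ir _]; case: eqP => // ix; move: xr; rewrite -ix ir.
Qed.

Lemma farkas_fin (I : finType) (a : I -> 'rV[R]_n) b :
  (forall z, (forall i, 0 <= dotv (a i) z) -> 0 <= dotv b z) ->
  exists c : I -> R, (forall i, 0 <= c i) /\ b = \sum_i c i *: a i.
Proof.
move=> H.
have : incone (map a (enum I)) b.
  apply: farkas => z Hz; apply: H => i; apply: Hz; apply: map_f.
  by rewrite mem_enum.
move=> /(@incone_seq I a _ b (enum_uniq _)) [c [c0 ->]]; exists c; split => //.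
by rewrite big_enum.
Qed.

End Farkas.
Arguments dotv {R n}.
Arguments incone {R n}.

Lemma dotv_mulmx (R : realFieldType) n q (u : 'rV[R]_n) (A : 'M[R]_(n, q)) z :
  dotv (u *m A) z = dotv u (z *m A^T).
Proof. by rewrite /dotv trmx_mul trmxK mulmxA. Qed.

Lemma dotv_delta (R : realFieldType) q (p : 'I_q) (v : 'rV[R]_q) :
  dotv (delta_mx 0 p) v = v 0 p.
Proof. by rewrite /dotv -rowE !mxE. Qed.

Lemma solve_mult (R : realFieldType) n q m0 (J : 'M[R]_(n, q)) (phi : 'rV[R]_q)
    (gf : 'rV[R]_n) :
  (exists y : 'rV[R]_n, forall p : 'I_q,
      ((p < m0)%N -> phi 0 p <= (y *m J) 0 p) /\
      (~~ (p < m0)%N -> phi 0 p = (y *m J) 0 p)) ->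
  exists w : 'rV[R]_q, (forall p : 'I_q, (p < m0)%N -> 0 <= w 0 p) /\
    forall p : 'I_q,
      ((p < m0)%N -> ((- gf - w *m J^T) *m J) 0 p + phi 0 p <= 0) /\
      (~~ (p < m0)%N -> ((- gf - w *m J^T) *m J) 0 p + phi 0 p = 0).
Proof.
move=> [y Hy].
set M := J^T *m J.
pose G (p : 'I_q) := (p < m0)%N.
pose a (i : ('I_q + 'I_q + 'I_q)%type) : 'rV[R]_q :=
  match i with
  | inl (inl p) => row p M
  | inl (inr p) => if G p then 0 else - row p M
  | inr p => if G p then - delta_mx 0 p else 0
  end.
pose c := phi - gf *m J.
have r1 : forall z p, dotv (row p M) z = ((z *m J^T) *m J) 0 p.
  move=> z p; rewrite rowE dotv_mulmx dotv_delta /M trmx_mul trmxK mulmxA //.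
have [cc [cc0 Hc]] : exists cc : _ -> R, (forall i, 0 <= cc i) /\ c = \sum_i cc i *: a i.
  apply: farkas_fin => z Hz.
  set zeta := z *m J^T.
  have H1 : forall p, 0 <= (zeta *m J) 0 p by move=> p; rewrite -r1; exact: (Hz (inl (inl p))).
  have H2 : forall p, ~~ G p -> (zeta *m J) 0 p = 0.
    move=> p Gp; apply/eqP; rewrite eq_le H1 andbT.
    have := Hz (inl (inr p)); rewrite /= (negbTE Gp) dotvNl r1 oppr_ge0 //.
  have H3 : forall p, G p -> z 0 p <= 0.
    move=> p Gp; have := Hz (inr p); rewrite /= Gp dotvNl dotv_delta oppr_ge0 //.
  have zeta0 : zeta = 0.
    apply/eqP; apply: contraT => /dotv_self_gt0; rewrite ltNge => /negP Hn; exfalso; apply: Hn.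
    rewrite {1}/zeta dotv_mulmx trmxK dotvC dotvE.
    apply: sumr_le0 => p _; case Gp: (G p).
      by rewrite mulrC; apply: mulr_le0_ge0; [exact: H3| exact: H1].
    by rewrite H2 ?Gp // mul0r.
  rewrite /c dotvBl dotv_mulmx -/zeta zeta0.
  have -> : dotv gf 0 = 0 by rewrite /dotv trmx0 mulmx0 mxE.
  rewrite subr0.
  have : dotv (y *m J) z = 0 by rewrite dotv_mulmx -/zeta zeta0 /dotv trmx0 mulmx0 mxE.
  move=> <-; rewrite !dotvE; apply: ler_sum => p _.
  have [Hl Hr] := Hy p; case Gp: (G p).
    by rewrite !(mulrC _ (z 0 p)); apply: ler_wnM2l; [exact: H3 | exact: Hl].
  have Gp' : ~~ (p < m0)%N by rewrite -/(G p) Gp.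
  by rewrite Hr.
move: Hc; rewrite !big_sumType /=.
set w := \row_p (cc (inl (inl p)) - (if G p then 0 else cc (inl (inr p)))).
set s3 := \row_p (if G p then cc (inr p) else 0).
have E1 : \sum_i cc (inl (inl i)) *: row i M + \sum_i cc (inl (inr i)) *: (if G i then 0 else - row i M)
    = w *m M.
  rewrite mulmx_sum_row -big_split; apply: eq_bigr => p _ /=; rewrite mxE.
  by case: (G p); rewrite ?scaler0 ?addr0 ?subr0 // scalerN scalerBl.
have E2 : \sum_i cc (inr i) *: (if G i then - delta_mx 0 i else 0) = - s3.
  rewrite [s3 in RHS]row_sum_delta -sumrN; apply: eq_bigr => p _; rewrite mxE.
  by case: (G p); rewrite ?scaler0 ?scale0r ?oppr0 // scalerN.
rewrite E1 E2 => Hc.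
exists w; split.
  by move=> p Gp; rewrite mxE /G Gp subr0; exact: cc0.
have key : (- gf - w *m J^T) *m J + phi = - s3.
  rewrite mulmxBl -mulmxA -/M.
  have -> : w *m M = c + s3 by rewrite Hc subrK.
  rewrite /c mulNmx; apply/rowP => j; rewrite !mxE; ring.
move=> p; have := congr1 (fun v : 'rV[R]_q => v 0 p) key; rewrite /= !mxE => ->.
split => Gp; first by rewrite oppr_le0 /G Gp; exact: cc0.
have -> : G p = false by apply: negbTE.
by rewrite oppr0.
Qed.
Lemma mx_continuous (R : realType) (T : topologicalType) p q (F : T -> 'M[R]_(p, q)) :
  (forall i j, continuous (fun x => F x i j)) -> continuous F.
Proof.
move=> H x; apply/(@cvg_mx_entourageP R p q _ _ (F x)) => A entA.
apply: filter_forall => i; apply: filter_forall => j.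
have := H i j x; move/cvg_entourageP => /(_ A entA).
move=> HA.
have HA' : nbhs x [set y | A (F x i j, F y i j)] := HA.
change (nbhs x [set y | (F x i j, F y i j) \in A]).
apply: filterS HA' => y Hy /=; exact/mem_set.
Qed.

Lemma mulmxr_continuous (R : realType) p q r (A : 'M[R]_(q, r)) :
  continuous (fun M : 'M[R]_(p, q) => M *m A).
Proof.
apply: mx_continuous => i j.
under eq_fun do rewrite mxE.
apply: continuous_big => [|l _].
  exact: add_continuous.
move=> M0.
have h1 := @coord_continuous R p q i l M0.
have h2 : (fun _ : 'M[R]_(p, q) => A l j) @ M0 --> A l j.
  exact: (@cst_continuous _ _ (A l j) M0).
have := cvgM h1 h2.
exact.
Qed.
Lemma mulmxr_diff {R : realType} {p q r} (A : 'M[R]_(q, r)) (M : 'M[R]_(p, q)) :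
  differentiable (mulmxr A) M /\ 'd (mulmxr A) M = mulmxr A :> (_ -> _).
Proof.
split; first exact/linear_differentiable/mulmxr_continuous.
exact/diff_lin/mulmxr_continuous.
Qed.

Lemma C1_row (R : realType) n m k (g : 'rV[R]_n -> 'rV[R]_m) (h : 'rV[R]_n -> 'rV[R]_k)
   Jg Jh : C1_vec g Jg -> C1_vec h Jh ->
   C1_vec (fun x => row_mx (g x) (h x)) (fun x => row_mx (Jg x) (Jh x)).
Proof.
move=> [Hg cJg] [Hh cJh]; split; last first.
  apply: mx_continuous => i j.
  case: (split_ordP j) => j' -> .
    under eq_fun do rewrite row_mxEl.
    by move=> x; apply: (@continuous_comp _ _ _ Jg (fun M => M i j') x (cJg x)); exact: coord_continuous.
  under eq_fun do rewrite row_mxEr.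
  by move=> x; apply: (@continuous_comp _ _ _ Jh (fun M => M i j') x (cJh x)); exact: coord_continuous.
move=> x.
pose Lm : 'M[R]_(m, m + k) := row_mx 1%:M 0.
pose Rm : 'M[R]_(k, m + k) := row_mx 0 1%:M.
have E : (fun x => row_mx (g x) (h x)) = (mulmxr Lm \o g) + (mulmxr Rm \o h).
  apply: funext => y /=.
  change (row_mx (g y) (h y) = g y *m Lm + h y *m Rm).
  by rewrite /Lm /Rm !mul_mx_row !mulmx1 !mulmx0 add_row_mx addr0 add0r.
have [dg dgE] := Hg x; have [dh dhE] := Hh x.
have [dL dLE] := mulmxr_diff Lm (g x).
have [dR dRE] := mulmxr_diff Rm (h x).
have d1 := differentiable_comp dg dL.
have d2 := differentiable_comp dh dR.
rewrite E; split; first exact: (differentiableD d1 d2).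
move=> v; rewrite (diffD d1 d2).
have e1 := congr1 (fun F => F v) (diff_comp dg dL).
have e2 := congr1 (fun F => F v) (diff_comp dh dR).
have e1' : 'd (mulmxr Lm \o g) x v = v *m Jg x *m Lm :=
  etrans e1 (etrans (congr1 (fun F => F ('d g x v)) dLE) (congr1 (mulmxr Lm) (dgE v))).
have e2' : 'd (mulmxr Rm \o h) x v = v *m Jh x *m Rm :=
  etrans e2 (etrans (congr1 (fun F => F ('d h x v)) dRE) (congr1 (mulmxr Rm) (dhE v))).
have T : v *m row_mx (Jg x) (Jh x) = v *m Jg x *m Lm + v *m Jh x *m Rm.
  rewrite -!mulmxA -mulmxDr /Lm /Rm !mul_mx_row !mulmx1 !mulmx0 add_row_mx addr0 add0r.
  by rewrite mul_mx_row.
rewrite T -e1' -e2'.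
reflexivity.
Qed.

Section EC.
Context {R : realType} {T : topologicalType} {x0 : T}.

Definition ec {a b} (F : T -> 'M[R]_(a, b)) :=
  forall i j, (continuous_at x0 (fun x => F x i j)).

Lemma sc_eq (f g : T -> R) : f =1 g -> continuous_at x0 f -> continuous_at x0 g.
Proof. by move=> /funext ->. Qed.

Lemma ec_eq {a b} (F G : T -> 'M[R]_(a, b)) : (forall x, F x = G x) -> ec F -> ec G.
Proof. by move=> /funext ->. Qed.

Lemma sc_add {f g : T -> R} : (continuous_at x0 f) -> (continuous_at x0 g) ->
  (continuous_at x0 (fun x => f x + g x)).
Proof. by move=> hf hg; apply: (continuousD hf hg). Qed.

Lemma sc_mul {f g : T -> R} : (continuous_at x0 f) -> (continuous_at x0 g) ->
  (continuous_at x0 (fun x => f x * g x)).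
Proof. by move=> hf hg; apply: (continuousM hf hg). Qed.

Lemma sc_cst (c : R) : (continuous_at x0 (fun _ : T => c)).
Proof. exact: cst_continuous. Qed.

Lemma sc_sum (I : Type) (r : seq I) (P : pred I) (F : I -> T -> R) :
  (forall i, (continuous_at x0 (F i))) ->
  (continuous_at x0 (fun x => \sum_(i <- r | P i) F i x)).
Proof.
move=> H; apply: (@cvg_big R I _ (0 : R) P add_continuous T (nbhs x0) r F (fun i => F i x0)).
by move=> i _; exact: H.
Qed.

Lemma sc_prod (I : Type) (r : seq I) (P : pred I) (F : I -> T -> R) :
  (forall i, (continuous_at x0 (F i))) ->
  (continuous_at x0 (fun x => \prod_(i <- r | P i) F i x)).
Proof.
move=> H; apply: (@cvg_big R I _ (1 : R) P mul_continuous T (nbhs x0) r F (fun i => F i x0)).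
by move=> i _; exact: H.
Qed.

Lemma ec_cst {a b} (A : 'M[R]_(a, b)) : ec (fun _ => A).
Proof. by move=> i j; exact: sc_cst. Qed.

Lemma ec_add {a b} {F G : T -> 'M[R]_(a, b)} : ec F -> ec G -> ec (fun x => F x + G x).
Proof.
move=> hF hG i j; apply: (@sc_eq (fun x => F x i j + G x i j)); last exact: sc_add.
by move=> x; rewrite mxE.
Qed.

Lemma ec_opp {a b} {F : T -> 'M[R]_(a, b)} : ec F -> ec (fun x => - F x).
Proof.
move=> hF i j; apply: (@sc_eq (fun x => -1 * F x i j)); last exact: sc_mul (sc_cst (-1)) (hF i j).
by move=> x; rewrite mxE mulN1r.
Qed.

Lemma ec_scale {a b} {c : T -> R} {F : T -> 'M[R]_(a, b)} : (continuous_at x0 c) -> ec F ->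
  ec (fun x => c x *: F x).
Proof.
move=> hc hF i j; apply: (@sc_eq (fun x => c x * F x i j)); last exact: sc_mul.
by move=> x; rewrite mxE.
Qed.

Lemma ec_mul {a b d} {F : T -> 'M[R]_(a, b)} {G : T -> 'M[R]_(b, d)} : ec F -> ec G ->
  ec (fun x => F x *m G x).
Proof.
move=> hF hG i j; apply: (@sc_eq (fun x => \sum_l F x i l * G x l j)).
  by move=> x; rewrite mxE.
by apply: sc_sum => l; apply: sc_mul.
Qed.

Lemma ec_tr {a b} {F : T -> 'M[R]_(a, b)} : ec F -> ec (fun x => (F x)^T).
Proof. by move=> hF i j; apply: (@sc_eq (fun x => F x j i)); [move=> x; rewrite mxE|exact: hF]. Qed.

Lemma sc_det {a} {F : T -> 'M[R]_a} : ec F -> (continuous_at x0 (fun x => \det (F x))).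
Proof.
move=> hF; rewrite /determinant.
apply: sc_sum => s; apply: sc_mul; first exact: sc_cst.
by apply: sc_prod => i; exact: hF.
Qed.

Lemma ec_adj {a} {F : T -> 'M[R]_a} : ec F -> ec (fun x => \adj (F x)).
Proof.
move=> hF i j.
apply: (@sc_eq (fun x => (-1) ^+ (j + i) * \det (row' j (col' i (F x))))).
  by move=> x; rewrite mxE.
apply: sc_mul; first exact: sc_cst.
apply: sc_det => p l; apply: (@sc_eq (fun x => F x (lift j p) (lift i l))); last exact: hF.
by move=> x; rewrite !mxE.
Qed.

Lemma ec_of_cont {a b} {F : T -> 'M[R]_(a, b)} : (continuous_at x0 F) -> ec F.
Proof.
move=> hF i j.
exact: (@continuous_comp _ _ _ F (fun M => M i j) x0 hF (@coord_continuous R a b i j (F x0))).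
Qed.

End EC.
Arguments ec {R T} x0 {a b} F.

Lemma pos_near (R : realType) n (f : 'rV[R]_n -> R) x0 :
  continuous_at x0 f -> 0 < f x0 -> \forall x \near x0, 0 < f x.
Proof. by move=> hf h0; exact: (@cvgr_gt R _ (nbhs x0) _ f (f x0) hf 0 h0). Qed.

Lemma small_s (R : realType) m (gv a : 'rV[R]_m) :
  (forall i, gv 0 i <= 0) -> (forall i, gv 0 i = 0 -> a 0 i < 0) ->
  exists2 s : R, 0 < s & forall i, gv 0 i < - (s * a 0 i).
Proof.
move=> g0 ga.
pose F i := if gv 0 i < 0 then - gv 0 i / (`|a 0 i| + 1) else 1.
have Fpos : forall i, 0 < F i.
  move=> i; rewrite /F; case: ifP => // gi.
  by apply: divr_gt0; rewrite ?oppr_gt0 // ltr_wpDl.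
exists (\big[Num.min/1]_i F i).
  by apply: lt_bigmin => // i _; exact: Fpos.
move=> i; have sle : \big[Num.min/1]_i F i <= F i by exact: bigmin_le.
set s := \big[Num.min/1]_i F i in sle *.
have s0 : 0 < s by apply: lt_bigmin => // j _; exact: Fpos.
move: sle; rewrite /F; case: ltP => gi sle.
  set A := `|a 0 i| in sle.
  have A0 : 0 <= A by exact: normr_ge0.
  have aA : a 0 i <= A by exact: ler_norm.
  set u := - gv 0 i / (A + 1) in sle.
  have uE : u * (A + 1) = - gv 0 i by rewrite /u divfK // gt_eqF // ltr_wpDl.
  have u0 : 0 < u by apply: divr_gt0; rewrite ?oppr_gt0 // ltr_wpDl.
  have h1 : s * a 0 i <= s * A by rewrite ler_pM2l.
  have h2 : s * A <= u * A by rewrite ler_wpM2r.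
  nra.
have gi0 : gv 0 i = 0 by apply/eqP; rewrite eq_le gi g0.
rewrite gi0 oppr_gt0 pmulr_rlt0 //; exact: ga.
Qed.

Lemma local_feas (R : realType) n m k (g : 'rV[R]_n -> 'rV[R]_m) (h : 'rV[R]_n -> 'rV[R]_k)
    Jg Jh (x0 : 'rV[R]_n) :
  C1_vec g Jg -> C1_vec h Jh -> (forall i, g x0 0 i <= 0) -> (forall j, h x0 0 j = 0) ->
  MFCQ g h Jg Jh x0 ->
  nbhs x0 [set x | exists y : 'rV[R]_n, (forall i, g x 0 i <= (y *m Jg x) 0 i) /\
                                        (forall j, h x 0 j = (y *m Jh x) 0 j)].
Proof.
move=> [Hg cJg] [Hh cJh] g0 h0 [rf [xi [xiH xiG]]].
have [B HB] := row_freeP rf.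
pose E := B^T.
have EJ : E *m Jh x0 = 1%:M by rewrite /E -[Jh x0]trmxK -trmx_mul HB trmx1.
have [s s0 Hs] := @small_s R m (g x0) (xi *m Jg x0) g0 (fun i gi => xiG i gi).
pose Q x := E *m Jh x.
pose dt x := \det (Q x).
pose r x := h x + s *: (xi *m Jh x).
pose z x := (dt x)^-1 *: (r x *m \adj (Q x)).
pose y x := - (s *: xi) + z x *m E.
have ecJh : ec x0 Jh := ec_of_cont (cJh x0).
have ecJg : ec x0 Jg := ec_of_cont (cJg x0).
have ech : ec x0 h := ec_of_cont (differentiable_continuous (Hh x0).1).
have ecg : ec x0 g := ec_of_cont (differentiable_continuous (Hg x0).1).
have ecQ : ec x0 Q := ec_mul (ec_cst (x0:=x0) E) ecJh.
have dt0 : dt x0 = 1 by rewrite /dt /Q EJ det1.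
have cdt : continuous_at x0 dt := sc_det ecQ.
have cinv : continuous_at x0 (fun x => (dt x)^-1).
  by apply: continuousV => //; rewrite dt0 oner_neq0.
have ecr : ec x0 r := ec_add ech (ec_scale (sc_cst (x0:=x0) s) (ec_mul (ec_cst (x0:=x0) xi) ecJh)).
have ecz : ec x0 z := ec_scale cinv (ec_mul ecr (ec_adj ecQ)).
have ecy : ec x0 y := ec_add (ec_cst (x0:=x0) _) (ec_mul ecz (ec_cst (x0:=x0) E)).
have ecV : ec x0 (fun x => y x *m Jg x - g x) := ec_add (ec_mul ecy ecJg) (ec_opp ecg).
have r0 : r x0 = 0.
  apply/rowP => j; rewrite /r !mxE h0 add0r.
  by have := xiH j; rewrite mxE => ->; rewrite mulr0.
have y0 : y x0 = - (s *: xi) by rewrite /y /z r0 mul0mx scaler0 mul0mx addr0.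
have Vpos : forall i, \forall x \near x0, 0 < (y x *m Jg x - g x) 0 i.
  move=> i; apply: pos_near; first exact: ecV.
  move: (Hs i); rewrite y0 mulNmx -scalemxAl !mxE subr_gt0 //.
have dpos : \forall x \near x0, 0 < dt x by apply: pos_near => //; rewrite dt0.
have Vall : \forall x \near x0, forall i, 0 < (y x *m Jg x - g x) 0 i.
  exact: (@filter_forall _ _ (fun i x => 0 < (y x *m Jg x - g x) 0 i) (nbhs x0) _ Vpos).
apply: filterS (filterI Vall dpos) => x [Vx dx].
exists (y x); split.
  by move=> i; have := Vx i; rewrite !mxE subr_gt0 => /ltW.
have yJ : y x *m Jh x = h x.
  rewrite /y mulmxDl -mulmxA -/(Q x) /z -scalemxAl -mulmxA mul_adj_mx -/(dt x).
  rewrite mul_mx_scalar scalerA mulVf ?gt_eqF // scale1r /r.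
  by rewrite mulNmx -scalemxAl addrCA addNr addr0.
by move=> j; rewrite yJ.
Qed.

Theorem mainTheorem9 (R : realType) (n m k : nat)
  (f : 'rV[R]_n -> R) (g : 'rV[R]_n -> 'rV[R]_m) (h : 'rV[R]_n -> 'rV[R]_k)
  (gradf : 'rV[R]_n -> 'rV[R]_n)
  (Jg : 'rV[R]_n -> 'M[R]_(n, m)) (Jh : 'rV[R]_n -> 'M[R]_(n, k)) :
  C1_scalar f gradf -> C1_vec g Jg -> C1_vec h Jh ->
  let C := [set x | (forall i : 'I_m, g x 0 i <= 0) /\ (forall j : 'I_k, h x 0 j = 0)] in
  (forall x, C x -> MFCQ g h Jg Jh x) ->
  exists X : set 'rV[R]_n, open X /\ C `<=` X /\
    vector_cbf (fun x => row_mx (g x) (h x)) C X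
      (fun x => - gradf x)
      (fun x => - (row_mx (Jg x) (Jh x))^T)
      (@input_set R m k).
Proof.
move=> Hf Hg Hh C HM.
set S := [set x | exists y : 'rV[R]_n, (forall i, g x 0 i <= (y *m Jg x) 0 i) /\
                                        (forall j, h x 0 j = (y *m Jh x) 0 j)].
have CS : C `<=` S°.
  move=> x Cx; exact: (@local_feas R n m k g h Jg Jh x Hg Hh Cx.1 Cx.2 (HM x Cx)).
have HC1 := @C1_row R n m k g h Jg Jh Hg Hh.
exists S°; split; first exact: open_interior.
split; first exact: CS.
split; first exact: CS.
split; first by exists (fun x => row_mx (Jg x) (Jh x)).
split.
  apply: funext => x; apply: propext; rewrite /C /=.
  split => -[H1 H2]; split => i.
  - by rewrite row_mxEl.
  - by rewrite row_mxEr.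
  - by have := H1 i; rewrite row_mxEl.
  - by have := H2 i; rewrite row_mxEr.
exists 1; split; first exact: ltr01.
move=> x Xx; have [y [Hy1 Hy2]] := interior_subset Xx.
have Hyp : exists y : 'rV[R]_n, forall p : 'I_(m + k),
      ((p < m)%N -> row_mx (g x) (h x) 0 p <= (y *m row_mx (Jg x) (Jh x)) 0 p) /\
      (~~ (p < m)%N -> row_mx (g x) (h x) 0 p = (y *m row_mx (Jg x) (Jh x)) 0 p).
  exists y => p.
  case: (split_ordP p) => [i ->|j ->]; rewrite mul_mx_row.
    by rewrite !row_mxEl; split => // _; exact: Hy1.
  by rewrite !row_mxEr; split => // _; exact: Hy2.
have [w [Hw0 Hw]] := @solve_mult R n (m + k) m (row_mx (Jg x) (Jh x))
   (row_mx (g x) (h x)) (gradf x) Hyp.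
  exists w; split.
    by move=> i; apply: Hw0; exact: (ltn_ord i).
  have dE := (HC1.1 x).2.
  have eq1 : - gradf x + w *m - (row_mx (Jg x) (Jh x))^T = - gradf x - w *m (row_mx (Jg x) (Jh x))^T.
    by rewrite mulmxN.
  split.
    move=> i; rewrite dE eq1 mul1r; apply: (Hw (lshift k i)).1.
    exact: (ltn_ord i).
  move=> j; rewrite dE eq1 mul1r; apply: (Hw (rshift m j)).2.
  by rewrite /= -leqNgt leq_addr.
Qed.
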